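(* Let $\mathcal{F}$ be a real inner product space with inner product $\langle\cdot,\cdot\rangle$, let $\mathcal{K}:\mathcal{F}\to\mathcal{F}$ be linear, and let $\mathcal{S}\subset\mathcal{F}$ be a subspace with $\dim\mathcal{S}=\dim\mathcal{K}\mathcal{S}=s$. Let $0\le\theta_1\le\dots\le\theta_s\le\pi/2$ be the principal angles between $\mathcal{S}$ and $\mathcal{K}\mathcal{S}$ in increasing order, with principal vectors $u^{\mathcal{S}}_1,\dots,u^{\mathcal{S}}_s\in\mathcal{S}$ and $\mathcal{K}v^{\mathcal{K}\mathcal{S}}_1,\dots,\mathcal{K}v^{\mathcal{K}\mathcal{S}}_s\in\mathcal{K}\mathcal{S}$ (orthonormal families with $\langle u^{\mathcal{S}}_i,\mathcal{K}v^{\mathcal{K}\mathcal{S}}_j\rangle=\delta_{ij}\cos\theta_i$). Let $\Lambda_{\cos}=\mathrm{diag}(\cos\theta_1,\dots,\cos\theta_s)$ and $\Lambda_{\sin}=\mathrm{diag}(\sin\theta_1,\dots,\sin\theta_s)$. Let $\mathcal{S}^{\mathrm{new}}=\mathrm{span}(u^{\mathcal{S}}_1,\dots,u^{\mathcal{S}}_{s-1})$, so $\mathcal{K}\mathcal{S}^{\mathrm{new}}=\mathrm{span}(\mathcal{K}u^{\mathcal{S}}_1,\dots,\mathcal{K}u^{\mathcal{S}}_{s-1})$. Let $WR=[\mathcal{K}u^{\mathcal{S}}_1,\dots,\mathcal{K}u^{\mathcal{S}}_s]$ be a thin QR decomposition, with $W=[w_1,\dots,w_s]$ orthonormal elements of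 $\mathcal{F}$ and $R\in\mathbb{R}^{s\times s}$ upper triangular, and set $\omega=w_s$. Write $\omega=\sum_{i=1}^s d^{\omega}_i\,\mathcal{K}v^{\mathcal{K}\mathcal{S}}_i$ and $d^\omega=[d^\omega_1,\dots,d^\omega_s]^\top$. Define $N_1=\Lambda_{\sin}^2+\Lambda_{\cos}d^\omega(\Lambda_{\cos}d^\omega)^\top\in\mathbb{R}^{s\times s}$, and let $\tilde N_1\in\mathbb{R}^{(s-1)\times(s-1)}$ be obtained by deleting the last row and column of $N_1$. Let $(\lambda_\alpha,z_\alpha)_{\alpha=1}^{s-1}$ be the eigenpairs of $\tilde N_1$ with $\lambda_1\le\dots\le\lambda_{s-1}$ and $z_\alpha$ orthonormal. Then, for every $\alpha=1,\dots,s-1$, $$\sin^2\theta_\alpha(\mathcal{S}^{\mathrm{new}},\mathcal{K}\mathcal{S}^{\mathrm{new}})=\lambda_\alpha,\qquad u^{\mathcal{S}^{\mathrm{new}}}_\alpha=\mathcal{U}_{s-1}z_\alpha,$$ where $\mathcal{U}_{s-1}=[u^{\mathcal{S}}_1,\dots,u^{\mathcal{S}}_{s-1}]$ (so $\mathcal{U}_{s-1}z_\alpha=\sum_{j=1}^{s-1}(z_\alpha)_j u^{\mathcal{S}}_j$) and $\{u^{\mathcal{S}^{\mathrm{new}}}_\alpha\}$ are principal vectors of $\mathcal{S}^{\mathrm{new}}$ with respect to $\mathcal{K}\mathcal{S}^{\mathrm{new}}$.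
   Context: Principal angles and vectors between subspaces $\mathcal{U},\mathcal{V}$ of an inner product space with $k=\min\{\dim\mathcal{U},\dim\mathcal{V}\}$: angles $0\le\theta_1\le\dots\le\theta_k\le\pi/2$ defined recursively by $\cos\theta_j=\max|\langle u,v\rangle|$ over unit $u\in\mathcal{U}$, $v\in\mathcal{V}$ with $u$ orthogonal to $u_1,\dots,u_{j-1}$ and $v$ orthogonal to $v_1,\dots,v_{j-1}$; the maximizers $(u_j,v_j)$ are the $j$-th pair of principal vectors. A thin QR decomposition of a tuple $[f_1,\dots,f_s]$ of elements of $\mathcal{F}$ is $f_j=\sum_{i\le j}R_{ij}w_i$ with $w_1,\dots,w_s$ orthonormal (Gram–Schmidt). *)

(* Defs.v *)
From HB Require Import structures.
From mathcomp Require Import all_boot all_order all_algebra.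
From mathcomp Require Import all_classical all_reals all_analysis.
Set Implicit Arguments. Unset Strict Implicit. Unset Printing Implicit Defensive.
Import Order.TTheory GRing.Theory Num.Theory.
Local Open Scope ring_scope.
Local Open Scope classical_set_scope.

Section InnerProductSpaces.
Variables (R : realType) (V : lmodType R).

Definition inner_product (ip : V -> V -> R) : Prop :=
  [/\ forall x y, ip x y = ip y x,
      forall (a : R) x y z, ip (a *: x + y) z = a * ip x z + ip y z,
      forall x, 0 <= ip x x &
      forall x, ip x x = 0 -> x = 0].

Definition span_of (k : nat) (b : 'I_k -> V) : set V :=
  [set x | exists c : 'I_k -> R, x = \sum_(i < k) c i *: b i].

Definition free_fam (k : nat) (b : 'I_k -> V) : Prop :=
  forall c : 'I_k -> R, \sum_(i < k) c i *: b i = 0 -> forall i, c i = 0.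

Definition has_dim (S : set V) (k : nat) : Prop :=
  exists b : 'I_k -> V, free_fam b /\ S = span_of b.

(* (th, u, w) is a system of k principal angles / principal vectors between
   the subspaces U and W, following the recursive definition:
   cos th_j = max |<x,y>| over unit x in U, y in W with x orthogonal to
   u_1..u_{j-1} and y orthogonal to w_1..w_{j-1}; (u_j, w_j) is a maximizer. *)
Definition principal_system (ip : V -> V -> R) (U W : set V) (k : nat)
    (th : 'I_k -> R) (u w : 'I_k -> V) : Prop :=
  forall j : 'I_k,
  [/\ 0 <= th j <= pi / 2,
      U (u j) /\ W (w j),
      ip (u j) (u j) = 1 /\ ip (w j) (w j) = 1,
      (forall i : 'I_k, (i < j)%N -> ip (u j) (u i) = 0 /\ ip (w j) (w i) = 0) &
      `|ip (u j) (w j)| = cos (th j) /\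
      (forall x y, U x -> W y -> ip x x = 1 -> ip y y = 1 ->
         (forall i : 'I_k, (i < j)%N -> ip x (u i) = 0 /\ ip y (w i) = 0) ->
         `|ip x y| <= cos (th j))].

End InnerProductSpaces.

(* Main.v *)
Require Import Defs.
From HB Require Import structures.
From mathcomp Require Import all_boot all_order all_algebra.
From mathcomp Require Import all_classical all_reals all_analysis.
Import Order.TTheory GRing.Theory Num.Theory.
Local Open Scope ring_scope.
Local Open Scope classical_set_scope.
From mathcomp Require Import ring lra.
Set Implicit Arguments. Unset Strict Implicit. Unset Printing Implicit Defensive.
Section Core.
Variable R : realType.

Definition dot n (u v : 'cV[R]_n) : R := \sum_i u i 0 * v i 0.

Lemma dotE n (u v : 'cV[R]_n) : dot u v = (u^T *m v) 0 0.
Proof. by rewrite /dot mxE; apply: eq_bigr => i _; rewrite mxE. Qed.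

Lemma dotC n (u v : 'cV[R]_n) : dot u v = dot v u.
Proof. by apply: eq_bigr => i _; rewrite mulrC. Qed.

Lemma dot_mulmx n (A : 'M[R]_n) u v : dot u (A *m v) = dot (A^T *m u) v.
Proof. by rewrite !dotE trmx_mul trmxK mulmxA. Qed.

Lemma dot_ge0 n (u : 'cV[R]_n) : 0 <= dot u u.
Proof. by apply: sumr_ge0 => i _; rewrite -expr2 sqr_ge0. Qed.

Lemma dot_eq0 n (u : 'cV[R]_n) : dot u u = 0 -> u = 0.
Proof.
move=> /eqP; rewrite psumr_eq0 => [/allP H|i _]; last by rewrite -expr2 sqr_ge0.
apply/matrixP => i j; rewrite (ord1 j) !mxE.
have := H i (mem_index_enum i); rewrite -expr2 sqrf_eq0 => /eqP ->//.
Qed.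

Lemma dotZl n a (u v : 'cV[R]_n) : dot (a *: u) v = a * dot u v.
Proof. by rewrite /dot mulr_sumr; apply: eq_bigr => i _; rewrite mxE mulrA. Qed.
Lemma dotZr n a (u v : 'cV[R]_n) : dot u (a *: v) = a * dot u v.
Proof. by rewrite dotC dotZl dotC. Qed.
Lemma dotDl n (u v w : 'cV[R]_n) : dot (u + v) w = dot u w + dot v w.
Proof. by rewrite /dot -big_split; apply: eq_bigr => i _; rewrite mxE mulrDl. Qed.
Lemma dotDr n (u v w : 'cV[R]_n) : dot w (u + v) = dot w u + dot w v.
Proof. by rewrite dotC dotDl !(dotC w). Qed.
Lemma dotNl n (u v : 'cV[R]_n) : dot (- u) v = - dot u v.
Proof. by rewrite -scaleN1r dotZl mulN1r. Qed.
Lemma dotNr n (u v : 'cV[R]_n) : dot u (- v) = - dot u v.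
Proof. by rewrite -scaleN1r dotZr mulN1r. Qed.
Lemma dot0l n (v : 'cV[R]_n) : dot 0 v = 0.
Proof. by rewrite /dot big1 // => i _; rewrite mxE mul0r. Qed.
Lemma dot0r n (v : 'cV[R]_n) : dot v 0 = 0.
Proof. by rewrite dotC dot0l. Qed.

Lemma kernel_exists n (h : 'I_n -> 'cV[R]_n) (j : 'I_n) :
  exists2 a : 'cV_n, a != 0 & forall k, k != j -> dot (h k) a = 0.
Proof.
pose A : 'M[R]_n := \matrix_(k, i) (if k == j then 0 else h k i 0).
have : \det A^T == 0.
  rewrite det_tr (expand_det_row A j) big1 // => i _.
  by rewrite mxE eqxx mul0r.
case/det0P => v vn0 vA; exists v^T; first by rewrite trmx_eq0.
move=> k kj; have /matrixP /(_ k 0) := congr1 trmx vA.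
rewrite trmx_mul trmxK !mxE => <-; rewrite /dot; apply: eq_bigr => i _.
by rewrite !mxE (negbTE kj).
Qed.

End Core.
Section Core2.
Variable R : realType.

Lemma CS n (u v : 'cV[R]_n) : dot u v ^+ 2 <= dot u u * dot v v.
Proof.
have [u0|un0] := eqVneq u 0; first by rewrite u0 !dot0l expr0n /= mul0r.
have Ap : 0 < dot u u.
  rewrite lt_def dot_ge0 andbT; apply/eqP => /dot_eq0 /eqP; exact/negP.
have := dot_ge0 (dot u u *: v - dot u v *: u).
rewrite !(dotDl, dotDr, dotNl, dotNr, dotZl, dotZr) ?(dotC v u) => H.
have : 0 <= dot u u * (dot u u * dot v v - dot u v ^+ 2) by nra.
by rewrite pmulr_rge0 // subr_ge0.
Qed.

Lemma col_diag n (P F : 'M[R]_n) (al : 'I_n -> R) :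
  (forall i, P *m col i F = al i *: col i F) ->
  P *m F = F *m diag_mx (\row_i al i).
Proof.
move=> H; apply/matrixP => r k.
have := congr1 (fun M : 'cV_n => M r 0) (H k).
have e : (P *m col k F) r 0 = (P *m F) r k by rewrite colE mulmxA -colE mxE.
by rewrite e mul_mx_diag !mxE => ->; rewrite mulrC.
Qed.

Lemma rayleigh n (P F : 'M[R]_n) (al : 'I_n -> R) a :
  F^T *m F = 1%:M -> P *m F = F *m diag_mx (\row_i al i) ->
  dot (F *m a) (P *m (F *m a)) = \sum_i al i * a i 0 ^+ 2.
Proof.
move=> FF PF; rewrite mulmxA PF -mulmxA dot_mulmx mulmxA FF mul1mx.
rewrite /dot; apply: eq_bigr => i _; rewrite mul_diag_mx !mxE; ring.
Qed.

Lemma orth_sym n (F : 'M[R]_n) : F^T *m F = 1%:M -> F *m F^T = 1%:M.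
Proof. exact: mulmx1C. Qed.

Lemma spec_le n (P F G : 'M[R]_n) (al be : 'I_n -> R) :
  F^T *m F = 1%:M -> G^T *m G = 1%:M ->
  P *m F = F *m diag_mx (\row_i al i) -> P *m G = G *m diag_mx (\row_i be i) ->
  (forall i j : 'I_n, (i <= j)%N -> al j <= al i) ->
  (forall i j : 'I_n, (i <= j)%N -> be j <= be i) ->
  forall j, al j <= be j.
Proof.
move=> FF GG PF PG alm bem j.
pose h (k : 'I_n) : 'cV[R]_n := if (k < j)%N then F^T *m col k G else delta_mx k 0.
have [a an0 ha] := kernel_exists h j.
have az : forall k : 'I_n, (j < k)%N -> a k 0 = 0.
  move=> k jk; have kj : k != j by rewrite neq_ltn jk orbT.
  have := ha k kj; rewrite /h ltnNge (ltnW jk) /= /dot => <-.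
  rewrite (bigD1 k) //= big1 ?addr0 => [|i ik]; first by rewrite mxE !eqxx mul1r.
  by rewrite mxE (negbTE ik) mul0r.
pose x := F *m a.
have daa : 0 < dot a a.
  rewrite lt_def dot_ge0 andbT; apply/eqP => /dot_eq0 /eqP; exact/negP.
have dxx : dot x x = dot a a by rewrite /x dot_mulmx mulmxA FF mul1mx.
have H1 : al j * dot a a <= dot x (P *m x).
  rewrite /x (rayleigh _ FF PF) /dot mulr_sumr; apply: ler_sum => i _.
  have [ij|ji] := leqP i j; first by rewrite -expr2 ler_wpM2r ?sqr_ge0 // alm.
  by rewrite az // expr0n /= !mulr0.
pose g := G^T *m x.
have xg : x = G *m g by rewrite /g mulmxA orth_sym // mul1mx.
have gz : forall k : 'I_n, (k < j)%N -> g k 0 = 0.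
  move=> k kj; have kj' : k != j by rewrite neq_ltn kj.
  have := ha k kj'; rewrite /h kj -dot_mulmx => <-.
  rewrite /g /x /dot mxE; by apply: eq_bigr => i _; rewrite !mxE.
have H2 : dot x (P *m x) <= be j * dot a a.
  rewrite xg (rayleigh _ GG PG) -dxx xg dot_mulmx mulmxA GG mul1mx.
  rewrite /dot mulr_sumr; apply: ler_sum => i' _.
  have [ij|ji] := ltnP i' j; first by rewrite gz // expr0n /= !mulr0.
  by rewrite -expr2 ler_wpM2r ?sqr_ge0 // bem.
have := le_trans H1 H2; rewrite ler_pM2r //.
Qed.

End Core2.
Section Core3.
Variable R : realType.

Definition colmx n (f : 'I_n -> 'cV[R]_n) : 'M[R]_n := \matrix_(i, a) f a i 0.

Definition orthonormal n (f : 'I_n -> 'cV[R]_n) :=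
  forall a b, dot (f a) (f b) = (a == b)%:R.

Lemma col_colmx n (f : 'I_n -> 'cV[R]_n) a : col a (colmx f) = f a.
Proof. by apply/matrixP => i j; rewrite (ord1 j) !mxE. Qed.

Lemma colmx_orth n (f : 'I_n -> 'cV[R]_n) :
  orthonormal f -> (colmx f)^T *m colmx f = 1%:M.
Proof.
move=> H; apply/matrixP => a b; rewrite !mxE -H /dot.
by apply: eq_bigr => i _; rewrite !mxE.
Qed.

Lemma dot_suml n I (r : seq I) (P : pred I) (F : I -> 'cV[R]_n) v :
  dot (\sum_(i <- r | P i) F i) v = \sum_(i <- r | P i) dot (F i) v.
Proof.
rewrite /dot; under eq_bigr do rewrite summxE mulr_suml.
by rewrite exchange_big.
Qed.

Lemma dot_sumr n I (r : seq I) (P : pred I) (F : I -> 'cV[R]_n) v :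
  dot v (\sum_(i <- r | P i) F i) = \sum_(i <- r | P i) dot v (F i).
Proof. by rewrite dotC dot_suml; apply: eq_bigr => i _; rewrite dotC. Qed.

Lemma expand n (f : 'I_n -> 'cV[R]_n) : orthonormal f ->
  forall v, v = \sum_k dot (f k) v *: f k.
Proof.
move=> H v; have FF := orth_sym (colmx_orth H).
apply/matrixP => i j; rewrite (ord1 j) summxE.
transitivity (((colmx f) *m ((colmx f)^T *m v)) i 0).
  by rewrite mulmxA FF mul1mx.
rewrite mxE; apply: eq_bigr => k _; rewrite !mxE mulrC; congr (_ * _).
by rewrite /dot; apply: eq_bigr => l _; rewrite !mxE.
Qed.

Lemma parseval n (f : 'I_n -> 'cV[R]_n) : orthonormal f ->
  forall v, dot v v = \sum_k dot (f k) v ^+ 2.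
Proof.
move=> H v; rewrite {1}(expand H v) dot_suml; apply: eq_bigr => k _.
by rewrite dotZl expr2.
Qed.

Definition mps n (M : 'M[R]_n) (mu : 'I_n -> R) (c e : 'I_n -> 'cV[R]_n) :=
  forall j, [/\ dot (c j) (c j) = 1, dot (e j) (e j) = 1,
   (forall i : 'I_n, (i < j)%N -> dot (c j) (c i) = 0 /\ dot (e j) (e i) = 0),
   `|dot (c j) (M *m e j)| = mu j &
   forall x y, dot x x = 1 -> dot y y = 1 ->
     (forall i : 'I_n, (i < j)%N -> dot x (c i) = 0 /\ dot y (e i) = 0) ->
     `|dot x (M *m y)| <= mu j].

Lemma mps_tr n M mu (c e : 'I_n -> 'cV[R]_n) : mps M mu c e -> mps M^T mu e c.
Proof.
move=> H j; have [h1 h2 h3 h4 h5] := H j; split => //.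
- by move=> i ij; have [] := h3 i ij.
- by rewrite dot_mulmx trmxK dotC.
- move=> x y xx yy hxy; rewrite dot_mulmx trmxK dotC; apply: h5 => //.
  by move=> i ij; have [] := hxy i ij.
Qed.

Lemma mps_orth_c n M mu (c e : 'I_n -> 'cV[R]_n) : mps M mu c e -> orthonormal c.
Proof.
move=> H a b; have [ab|ab|ab] := ltngtP a b.
- have [_ _ h _ _] := H b; rewrite dotC (h a ab).1.
  by case: eqP => // E; rewrite E ltnn in ab.
- have [_ _ h _ _] := H a; rewrite (h b ab).1.
  by case: eqP => // E; rewrite E ltnn in ab.
- have -> : a = b by apply: val_inj.
  by have [->] := H b; rewrite eqxx.
Qed.

Lemma mps_hom n M mu (c e : 'I_n -> 'cV[R]_n) : mps M mu c e ->
  forall (j : 'I_n) x y, (forall i : 'I_n, (i < j)%N -> dot x (c i) = 0 /\ dot y (e i) = 0) ->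
  dot x (M *m y) ^+ 2 <= mu j ^+ 2 * dot x x * dot y y.
Proof.
move=> H j x y hxy; have [_ _ _ h4 h5] := H j.
have mu0 : 0 <= mu j by rewrite -h4.
have [->|xn0] := eqVneq x 0; first by rewrite !dot0l expr0n /= mulr0 mul0r.
have [->|yn0] := eqVneq y 0.
  by rewrite mulmx0 !dot0r expr0n /= mulr0.
have dxp : 0 < dot x x.
  rewrite lt_def dot_ge0 andbT; apply/eqP => /dot_eq0 /eqP; exact/negP.
have dyp : 0 < dot y y.
  rewrite lt_def dot_ge0 andbT; apply/eqP => /dot_eq0 /eqP; exact/negP.
set sx := Num.sqrt (dot x x); set sy := Num.sqrt (dot y y).
have sxp : 0 < sx by rewrite sqrtr_gt0.
have syp : 0 < sy by rewrite sqrtr_gt0.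
have sx2 : sx ^+ 2 = dot x x by rewrite sqr_sqrtr // ltW.
have sy2 : sy ^+ 2 = dot y y by rewrite sqr_sqrtr // ltW.
have := h5 (sx^-1 *: x) (sy^-1 *: y).
rewrite !(dotZl, dotZr) -scalemxAr dotZr.
have e1 : sx^-1 * (sx^-1 * dot x x) = 1.
  by rewrite -sx2; field; rewrite gt_eqF.
have e2 : sy^-1 * (sy^-1 * dot y y) = 1.
  by rewrite -sy2; field; rewrite gt_eqF.
move=> /(_ e1 e2) {e1 e2}.
have : forall i : 'I_n, (i < j)%N ->
    dot (sx^-1 *: x) (c i) = 0 /\ dot (sy^-1 *: y) (e i) = 0.
  by move=> i ij; rewrite !dotZl; have [-> ->] := hxy i ij; rewrite !mulr0.
move=> hh /(_ hh) {hh}.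
rewrite -sx2 -sy2.
set t := dot x (M *m y).
have -> : sx^-1 * (sy^-1 * t) = t / (sx * sy) by field; rewrite !gt_eqF.
rewrite normrM (ger0_norm (x := (sx * sy)^-1)); last by rewrite invr_ge0 mulr_ge0 // ltW.
rewrite ler_pdivrMr ?mulr_gt0 //.
move=> H1; have H0 : 0 <= `|t| by [].
rewrite -(real_normK (num_real t)).
have -> : mu j ^+ 2 * sx ^+ 2 * sy ^+ 2 = (mu j * (sx * sy)) ^+ 2 by ring.
by rewrite ler_pXn2r // ?nnegrE // mulr_ge0 // mulr_ge0 // ltW.
Qed.

Lemma mps_pert n M mu (c e : 'I_n -> 'cV[R]_n) : mps M mu c e ->
  forall (j : 'I_n) x, (forall i : 'I_n, (i < j)%N -> dot x (c i) = 0) ->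
  dot x (c j) = 0 -> dot x (M *m e j) = 0.
Proof.
move=> H j x hx hxj; have [h1 h2 h3 h4 _] := H j.
set a := dot (c j) (M *m e j); set b := dot x (M *m e j); set q := dot x x.
have q0 : 0 <= q by apply: dot_ge0.
have Ht : forall t, (a + t * b) ^+ 2 <= a ^+ 2 * (1 + t ^+ 2 * q).
  move=> t; have := mps_hom H (j := j) (x := c j + t *: x) (y := e j).
  have -> : mu j ^+ 2 = a ^+ 2 by rewrite -h4 real_normK ?num_real.
  rewrite h2 mulr1 !(dotDl, dotDr, dotZl, dotZr) h1 (dotC (c j) x) hxj.
  rewrite -/a -/b -/q; have -> : 1 + t * 0 + (t * 0 + t * (t * q)) = 1 + t ^+ 2 * q by ring.
  apply => i ij; have [h31 h32] := h3 i ij; rewrite h32 dotDl dotZl h31 hx //.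
  by rewrite mulr0 addr0.
have [a0|an0] := eqVneq a 0.
  have := Ht 1; rewrite a0 expr0n /= mul0r add0r mul1r => hb.
  by apply/eqP; rewrite -sqrf_eq0 eq_le hb sqr_ge0.
set D := 1 + a ^+ 2 * q.
have Dp : 0 < D by rewrite /D; have := sqr_ge0 a; nra.
set t := a * b / D.
have tD : t * D = a * b by rewrite /t; field; rewrite gt_eqF.
have H1 := Ht t.
have H2 : (a * D + a * b * b) ^+ 2 <= a ^+ 2 * (D ^+ 2 + (a * b) ^+ 2 * q).
  have e1 : (a * D + a * b * b) ^+ 2 = (a + t * b) ^+ 2 * D ^+ 2.
    by rewrite -tD; ring.
  have e2 : a ^+ 2 * (D ^+ 2 + (a * b) ^+ 2 * q) = a ^+ 2 * (1 + t ^+ 2 * q) * D ^+ 2.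
    by rewrite -tD; ring.
  by rewrite e1 e2 ler_wpM2r // sqr_ge0.
have H3 : a ^+ 2 * b ^+ 2 * (2 + a ^+ 2 * q + b ^+ 2) <= 0.
  move: H2; rewrite /D => H2; nra.
have : a ^+ 2 * b ^+ 2 = 0.
  apply/eqP; rewrite eq_le mulr_ge0 ?sqr_ge0 // andbT.
  have p : 0 < 2 + a ^+ 2 * q + b ^+ 2.
    by have := sqr_ge0 a; have := sqr_ge0 b; nra.
  by rewrite -(pmulr_lle0 _ p).
move/eqP; rewrite mulf_eq0 !sqrf_eq0 (negbTE an0) /= => /eqP //.
Qed.

End Core3.
Section Core4.
Variable R : realType.

Lemma mps_unique n M mu (c e z : 'I_n -> 'cV[R]_n) (lam : 'I_n -> R) :
  mps M mu c e -> orthonormal z ->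
  (forall a, (M *m M^T) *m z a = (1 - lam a) *: z a) ->
  (forall a b : 'I_n, (a <= b)%N -> lam a <= lam b) ->
  forall j, mu j ^+ 2 = 1 - lam j.
Proof.
move=> H oz Pz lamm.
have oc := mps_orth_c H; have oe := mps_orth_c (mps_tr H).
have mu0 : forall j, 0 <= mu j by move=> j; have [_ _ _ <- _] := H j.
have mumono : forall i j : 'I_n, (i <= j)%N -> mu j <= mu i.
  move=> i j ij; have [h1 h2 h3 h4 _] := H j; have [_ _ _ _ h5] := H i.
  rewrite -h4; apply: h5 => // k ki; apply: h3; exact: leq_trans ki ij.
have cross : forall i k, i != k -> dot (c i) (M *m e k) = 0.
  move=> i k ik; have [lt|lt|eq] := ltngtP i k.
  - have := mps_pert (mps_tr H) (j := i) (x := e k).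
    rewrite dot_mulmx trmxK => h; rewrite dotC; apply: h.
      move=> i' i'i; rewrite oe; case: eqP => // E.
      by move: (leq_trans i'i (ltnW lt)); rewrite E ltnn.
    by rewrite oe; case: eqP => // E; rewrite E ltnn in lt.
  - apply: (mps_pert H (j := k) (x := c i)).
      move=> i' i'k; rewrite oc; case: eqP => // E.
      by move: (leq_trans i'k (ltnW lt)); rewrite E ltnn.
    by rewrite oc; case: eqP => // E; rewrite E ltnn in lt.
  - by move: ik; rewrite (val_inj eq) eqxx.
have Mtc : forall j, M^T *m c j = dot (c j) (M *m e j) *: e j.
  move=> j; rewrite {1}(expand oe (M^T *m c j)) (bigD1 j) //= big1 ?addr0.
    by rewrite dot_mulmx trmxK dotC.
  move=> k kj; rewrite dot_mulmx trmxK dotC cross ?scale0r //.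
  by rewrite eq_sym.
have Me : forall j, M *m e j = dot (c j) (M *m e j) *: c j.
  move=> j; rewrite {1}(expand oc (M *m e j)) (bigD1 j) //= big1 ?addr0 //.
  by move=> k kj; rewrite cross ?scale0r.
have Pc : forall j, (M *m M^T) *m c j = mu j ^+ 2 *: c j.
  move=> j; rewrite -mulmxA Mtc -scalemxAr [X in _ *: X]Me scalerA.
  have [_ _ _ h4 _] := H j; rewrite -h4 real_normK ?num_real // expr2 //.
have PF := col_diag (P := M *m M^T) (F := colmx c) (al := fun j => mu j ^+ 2).
have PG := col_diag (P := M *m M^T) (F := colmx z) (al := fun j => 1 - lam j).
have hPF : (M *m M^T) *m colmx c = colmx c *m diag_mx (\row_i (mu i ^+ 2)).
  by apply: PF => i; rewrite col_colmx Pc.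
have hPG : (M *m M^T) *m colmx z = colmx z *m diag_mx (\row_i (1 - lam i)).
  by apply: PG => i; rewrite col_colmx Pz.
have alm : forall i j : 'I_n, (i <= j)%N -> mu j ^+ 2 <= mu i ^+ 2.
  move=> i j ij; have := mumono i j ij; have := mu0 j; nra.
have bem : forall i j : 'I_n, (i <= j)%N -> 1 - lam j <= 1 - lam i.
  by move=> i j ij; rewrite lerB // lamm.
move=> j; apply/eqP; rewrite eq_le.
rewrite (spec_le (colmx_orth oc) (colmx_orth oz) hPF hPG alm bem j).
by rewrite (spec_le (colmx_orth oz) (colmx_orth oc) hPG hPF bem alm j).
Qed.

End Core4.
Section Core5.
Variable R : realType.

Lemma normalize n (v : 'cV[R]_n) : v != 0 ->
  dot ((Num.sqrt (dot v v))^-1 *: v) ((Num.sqrt (dot v v))^-1 *: v) = 1.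
Proof.
move=> vn0; have dp : 0 < dot v v.
  rewrite lt_def dot_ge0 andbT; apply/eqP => /dot_eq0 /eqP; exact/negP.
have sp : 0 < Num.sqrt (dot v v) by rewrite sqrtr_gt0.
have s2 := sqr_sqrtr (ltW dp).
rewrite dotZl dotZr -{3}s2; field; rewrite gt_eqF //.
Qed.

Lemma complete n (J : pred 'I_n) (f : 'I_n -> 'cV[R]_n) :
  (forall a b, J a -> J b -> dot (f a) (f b) = (a == b)%:R) ->
  exists g, orthonormal g /\ forall a, J a -> g a = f a.
Proof.
suff H : forall m : nat, forall (J : pred 'I_n) (f : 'I_n -> 'cV[R]_n), #|[pred a | ~~ J a]| = m ->
  (forall a b, J a -> J b -> dot (f a) (f b) = (a == b)%:R) ->
  exists g, orthonormal g /\ forall a, J a -> g a = f a by apply: H.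
move=> m; clear J f; elim: m => [|m IH] J f hm hf.
  have JT : forall a, J a.
    by move=> a; have := card0_eq hm a; rewrite !inE; case: (J a).
  by exists f; split => // a b; apply: hf.
have [k0 hk0] : exists k0, ~~ J k0.
  have : (0 < #|[pred a | ~~ J a]|)%N by rewrite hm.
  by case/card_gt0P => x; rewrite inE => hx; exists x.
have [v vn0 hv] := kernel_exists (fun k => if J k then f k else 0) k0.
set v' := (Num.sqrt (dot v v))^-1 *: v.
have v'1 : dot v' v' = 1 by apply: normalize.
have fv' : forall a, J a -> dot (f a) v' = 0.
  move=> a Ja; have ak : a != k0 by apply: contraNneq hk0 => <-.
  by have := hv a ak; rewrite Ja /v' dotZr => ->; rewrite mulr0.
pose f' a := if a == k0 then v' else f a.
pose J' := [pred a | (a == k0) || J a].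
have hm' : #|[pred a | ~~ J' a]| = m.
  have := cardD1 k0 [pred a | ~~ J a]; rewrite hm inE hk0 add1n => -[->].
  by apply: eq_card => a; rewrite !inE negb_or.
have hf' : forall a b, J' a -> J' b -> dot (f' a) (f' b) = (a == b)%:R.
  move=> a b; rewrite /J' /f' !inE.
  case: (eqVneq a k0) => [->|ak] /=; case: (eqVneq b k0) => [->|bk] //= Ja Jb.
  - by rewrite dotC fv'.
  - by rewrite fv' // (negbTE ak).
  - exact: hf.
have [g [og hg]] := IH J' f' hm' hf'.
exists g; split => // a Ja; rewrite hg /f' ?inE ?Ja ?orbT //.
by case: eqP => // E; move: hk0; rewrite -E Ja.
Qed.

End Core5.
Section Core6.
Variable R : realType.

Lemma mps_exists n (M : 'M[R]_n) (z : 'I_n -> 'cV[R]_n) (lam : 'I_n -> R) :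
  orthonormal z -> (forall a, (M *m M^T) *m z a = (1 - lam a) *: z a) ->
  (forall a b : 'I_n, (a <= b)%N -> lam a <= lam b) ->
  exists e, mps M (fun a => Num.sqrt (1 - lam a)) z e.
Proof.
move=> oz Pz lamm.
pose sg a := Num.sqrt (1 - lam a).
pose g a := M^T *m z a.
have gg : forall a b, dot (g a) (g b) = (1 - lam b) * (a == b)%:R.
  move=> a b; rewrite /g -dot_mulmx mulmxA Pz dotZr oz //.
have lam1 : forall a, 0 <= 1 - lam a.
  by move=> a; have := dot_ge0 (g a); rewrite gg eqxx mulr1.
have sg2 : forall a, sg a ^+ 2 = 1 - lam a by move=> a; rewrite sqr_sqrtr.
pose J := [pred a | sg a != 0].
pose f a := (sg a)^-1 *: g a.
have [e [oe he]] : exists e, orthonormal e /\ forall a, J a -> e a = f a.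
  apply: complete => a b; rewrite !inE => Ja Jb.
  rewrite /f dotZl dotZr gg; case: eqVneq => [<-|]; last by rewrite !mulr0.
  by rewrite -sg2 /=; field.
have ge : forall a, g a = sg a *: e a.
  move=> a; case: (boolP (J a)) => Ja.
    by rewrite he // /f scalerA mulfV ?scale1r.
  move: Ja; rewrite inE negbK => /eqP s0; rewrite s0 scale0r.
  by apply: dot_eq0; rewrite gg eqxx mulr1 -sg2 s0 expr0n.
exists e => j; split.
- by rewrite oz eqxx.
- by rewrite oe eqxx.
- move=> i ij; rewrite oz oe; case: eqP => // E; by rewrite E ltnn in ij.
- rewrite dot_mulmx -/(g j) (ge j) dotZl oe eqxx mulr1 ger0_norm //.
  exact: sqrtr_ge0.
move=> x y xx yy hxy.
pose ga a := dot (z a) x.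
have Mx : M^T *m x = \sum_a (ga a * sg a) *: e a.
  rewrite {1}(expand oz x) mulmx_sumr; apply: eq_bigr => a _.
  by rewrite -scalemxAr -/(g a) ge scalerA.
rewrite dot_mulmx Mx dot_suml.
pose U := \col_a (ga a * sg a); pose B := \col_a (dot (e a) y).
have -> : \sum_a dot ((ga a * sg a) *: e a) y = dot U B.
  by rewrite [dot U B]/dot; apply: eq_bigr => a _; rewrite dotZl !mxE.
have BB : dot B B = 1.
  by rewrite -yy (parseval oe y) /dot; apply: eq_bigr => a _; rewrite !mxE expr2.
have UU : dot U U <= sg j ^+ 2.
  rewrite -[sg j ^+ 2]mulr1 -xx (parseval oz x) mulr_sumr [dot U U]/dot.
  apply: ler_sum => a _; rewrite !mxE -/(ga a).
  have [aj|ja] := ltnP a j.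
    have [h _] := hxy a aj; rewrite /ga dotC h !mul0r.
    by rewrite mulr_ge0 ?sqr_ge0.
  rewrite -expr2 exprMn mulrC ler_wpM2r ?sqr_ge0 // !sg2.
  by rewrite lerB // lamm.
have := CS U B; rewrite BB mulr1 => H.
have H2 := le_trans H UU.
rewrite -(ler_pXn2r (n := 2)) // ?nnegrE ?sqrtr_ge0 // real_normK //.
exact: num_real.
Qed.

End Core6.
Section VL.
Variables (R : realType) (V : lmodType R) (ip : V -> V -> R).
Hypothesis hip : inner_product ip.

Lemma ipC x y : ip x y = ip y x. Proof. by case: hip. Qed.
Lemma ipL a x y z : ip (a *: x + y) z = a * ip x z + ip y z. Proof. by case: hip. Qed.
Lemma ip0l z : ip 0 z = 0.
Proof. have := ipL 1 0 0 z; rewrite scale1r addr0 mul1r => h; lra. Qed.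
Lemma ipZl a x z : ip (a *: x) z = a * ip x z.
Proof. by have := ipL a x 0 z; rewrite addr0 ip0l addr0. Qed.
Lemma ipDl x y z : ip (x + y) z = ip x z + ip y z.
Proof. by have := ipL 1 x y z; rewrite scale1r mul1r. Qed.
Lemma ipNl x z : ip (- x) z = - ip x z.
Proof. by rewrite -scaleN1r ipZl mulN1r. Qed.
Lemma ipZr a x z : ip z (a *: x) = a * ip z x.
Proof. by rewrite ipC ipZl ipC. Qed.
Lemma ipDr x y z : ip z (x + y) = ip z x + ip z y.
Proof. by rewrite ipC ipDl !(ipC z). Qed.
Lemma ipNr x z : ip z (- x) = - ip z x.
Proof. by rewrite ipC ipNl ipC. Qed.
Lemma ip0r z : ip z 0 = 0. Proof. by rewrite ipC ip0l. Qed.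
Lemma ip_ge0 x : 0 <= ip x x. Proof. by case: hip. Qed.
Lemma ip_eq0 x : ip x x = 0 -> x = 0. Proof. by case: hip => _ _ _; apply. Qed.

Lemma ip_suml I (r : seq I) (P : pred I) (F : I -> V) z :
  ip (\sum_(i <- r | P i) F i) z = \sum_(i <- r | P i) ip (F i) z.
Proof.
elim/big_rec2: _ => [|i y1 y2 _ <-]; first by rewrite ip0l.
by rewrite ipDl.
Qed.
Lemma ip_sumr I (r : seq I) (P : pred I) (F : I -> V) z :
  ip z (\sum_(i <- r | P i) F i) = \sum_(i <- r | P i) ip z (F i).
Proof. by rewrite ipC ip_suml; apply: eq_bigr => i _; rewrite ipC. Qed.

Definition onV k (f : 'I_k -> V) := forall i j, ip (f i) (f j) = (i == j)%:R.

Lemma onV_tri k (f : 'I_k -> V) : (forall j, ip (f j) (f j) = 1) ->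
  (forall i j : 'I_k, (i < j)%N -> ip (f j) (f i) = 0) -> onV f.
Proof.
move=> h1 h2 a b; have [ab|ab|ab] := ltngtP a b.
- rewrite ipC h2 //; by case: eqP => // E; rewrite E ltnn in ab.
- rewrite h2 //; by case: eqP => // E; rewrite E ltnn in ab.
- have -> : a = b by apply: val_inj.
  by rewrite h1 eqxx.
Qed.

Lemma coef_on k (f : 'I_k -> V) (c : 'I_k -> R) j : onV f ->
  ip (\sum_i c i *: f i) (f j) = c j.
Proof.
move=> hof; rewrite ip_suml (bigD1 j) //= big1 ?addr0.
  by rewrite ipZl hof eqxx mulr1.
by move=> i ij; rewrite ipZl hof (negbTE ij) mulr0.
Qed.

Lemma expand_on k (f : 'I_k -> V) (c : 'I_k -> R) t : onV f ->
  t = \sum_i c i *: f i -> t = \sum_i ip t (f i) *: f i.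
Proof.
move=> hof ->; apply: eq_bigr => i _; by rewrite coef_on.
Qed.

Lemma ip_on k (f : 'I_k -> V) (c d : 'I_k -> R) : onV f ->
  ip (\sum_i c i *: f i) (\sum_i d i *: f i) = \sum_i c i * d i.
Proof.
move=> hof; rewrite ip_sumr; apply: eq_bigr => i _.
by rewrite ipZr coef_on // mulrC.
Qed.

Lemma CSV x y : ip x y ^+ 2 <= ip x x * ip y y.
Proof.
have [x0|xn0] := eqVneq x 0; first by rewrite x0 !ip0l expr0n /= mul0r.
have Ap : 0 < ip x x.
  rewrite lt_def ip_ge0 andbT; apply/eqP => /ip_eq0 /eqP; exact/negP.
have := ip_ge0 (ip x x *: y - ip x y *: x).
rewrite !(ipDl, ipDr, ipNl, ipNr, ipZl, ipZr) ?(ipC y x) => H.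
have : 0 <= ip x x * (ip x x * ip y y - ip x y ^+ 2) by nra.
by rewrite pmulr_rge0 // subr_ge0.
Qed.

Lemma span_ortho m (T : set V) (b f : 'I_m -> V) :
  T = span_of b -> onV f -> (forall i, T (f i)) ->
  forall t, T t -> t = \sum_i ip t (f i) *: f i.
Proof.
move=> Tb hof fT t tT.
have /choice [Af hA] : forall i, exists c : 'I_m -> R, f i = \sum_j c j *: b j.
  by move=> i; have := fT i; rewrite Tb => -[c ->]; exists c.
pose A : 'M[R]_m := \matrix_(i, j) Af i j.
pose G : 'M[R]_m := \matrix_(j, l) ip (b j) (b l).
have AGA : A *m G *m A^T = 1%:M.
  apply/matrixP => i k; rewrite [RHS]mxE -hof hA hA ip_suml -mulmxA mxE.
  apply: eq_bigr => l _; rewrite !mxE ipZl ip_sumr; congr (_ * _).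
  by apply: eq_bigr => j _; rewrite !mxE ipZr mulrC.
have Au : A \in unitmx.
  rewrite unitmxE unitfE; apply/eqP => dA.
  by have := congr1 determinant AGA; rewrite !det_mulmx dA !mul0r det1 => /eqP; rewrite eq_sym oner_eq0.
move: tT; rewrite Tb => -[a ta].
pose be := (\row_j a j) *m invmx A.
have beA : be *m A = \row_j a j by rewrite /be mulmxKV.
apply: (@expand_on _ _ (fun i => be 0 i)) => //; rewrite ta.
transitivity (\sum_i \sum_j (be 0 i * A i j) *: b j).
  rewrite exchange_big; apply: eq_bigr => j _.
  have := congr1 (fun M : 'M[R]_(1, m) => M 0 j) beA; rewrite !mxE => <-.
  by rewrite scaler_suml; apply: eq_bigr.
apply: eq_bigr => i _; rewrite hA scaler_sumr; apply: eq_bigr => j _.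
by rewrite /A mxE scalerA.
Qed.

End VL.
Lemma acos_le_pihalf (R : realType) (x : R) : 0 <= x <= 1 -> acos x <= pi / 2.
Proof.
move=> /andP [x0 x1].
have hx : -1 <= x <= 1 by apply/andP; split => //; lra.
have [/andP [a0 api] ca] := acos_def hx.
rewrite leNgt; apply/negP => H.
have pp : 0 < pi :> R := pi_gt0 R.
have : 0 < sin (acos x - pi / 2).
  apply: sin_gt0_pi; apply/andP; split; lra.
have : cos (acos x - pi / 2 + pi / 2) = - sin (acos x - pi / 2) by rewrite cosDpihalf.
rewrite subrK ca; lra.
Qed.
Unset Implicit Arguments.

Theorem theorem4 (R : realType) (V : lmodType R) (ip : V -> V -> R)
  (hip : inner_product ip) (K : {linear V -> V}) (S : set V) (n : nat)
  (hS : has_dim S n.+1) (hKS : has_dim (K @` S) n.+1)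
  (th : 'I_n.+1 -> R) (u v : 'I_n.+1 -> V)
  (hvS : forall i, S (v i))
  (hprinc : principal_system ip S (K @` S) th u (fun i => K (v i)))
  (hcos : forall i j, ip (u i) (K (v j)) = if i == j then cos (th i) else 0)
  (w : 'I_n.+1 -> V) (Rm : 'M[R]_n.+1)
  (hw : forall i j, ip (w i) (w j) = (i == j)%:R)
  (hRup : forall i j : 'I_n.+1, (j < i)%N -> Rm i j = 0)
  (hQR : forall j, K (u j) = \sum_(i < n.+1) Rm i j *: w i)
  (d : 'cV[R]_n.+1)
  (hd : w ord_max = \sum_(i < n.+1) d i 0 *: K (v i))
  (lam : 'I_n -> R) (z : 'I_n -> 'cV[R]_n) :
  let Lcos : 'M[R]_n.+1 := diag_mx (\row_i cos (th i)) in
  let Lsin : 'M[R]_n.+1 := diag_mx (\row_i sin (th i)) in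
  let N1 : 'M[R]_n.+1 := Lsin *m Lsin + (Lcos *m d) *m (Lcos *m d)^T in
  let N1t : 'M[R]_n := row' ord_max (col' ord_max N1) in
  (forall a b : 'I_n, (a <= b)%N -> lam a <= lam b) ->
  (forall a b : 'I_n, (z a)^T *m z b = (a == b)%:R%:M) ->
  (forall a : 'I_n, N1t *m z a = lam a *: z a) ->
  let Unm1 : 'I_n -> V := fun j => u (widen_ord (leqnSn n) j) in
  let Snew := span_of Unm1 in
  let KSnew := K @` Snew in
  let unew : 'I_n -> V := fun a => \sum_(j < n) z a j 0 *: Unm1 j in
  (forall (th' : 'I_n -> R) (u' w' : 'I_n -> V),
      principal_system ip Snew KSnew th' u' w' ->
      forall a, sin (th' a) ^+ 2 = lam a) /\
  (exists (th' : 'I_n -> R) (w' : 'I_n -> V),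
      principal_system ip Snew KSnew th' unew w' /\
      forall a, sin (th' a) ^+ 2 = lam a).
Proof.
move=> Lcos Lsin N1 N1t lamm zon Nz Unm1 Snew KSnew unew.
have onu : onV ip u.
  apply: (onV_tri hip) => [j|i j ij]; have [_ _ h3 h4 _] := hprinc j; first exact: h3.1.
  exact: (h4 i ij).1.
have onKv : onV ip (fun i => K (v i)).
  apply: (onV_tri hip) => [j|i j ij]; have [_ _ h3 h4 _] := hprinc j; first exact: h3.2.
  exact: (h4 i ij).2.
have uS : forall j, S (u j) by move=> j; have [_ [h _] _ _ _] := hprinc j.
have [b [_ Sb]] := hS.
have Sexp : forall x, S x -> x = \sum_j ip x (u j) *: u j := span_ortho hip Sb onu uS.
pose Q i k := ip (w i) (K (v k)).
have Kvw0 : forall k, K (v k) = \sum_i (\sum_j ip (v k) (u j) * Rm i j) *: w i.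
  move=> k; rewrite {1}(Sexp _ (hvS k)) linear_sum.
  transitivity (\sum_j \sum_i (ip (v k) (u j) * Rm i j) *: w i); last first.
    by rewrite exchange_big; apply: eq_bigr => i _; rewrite scaler_suml.
  apply: eq_bigr => j _; rewrite linearZ /= hQR scaler_sumr; apply: eq_bigr => i _.
  by rewrite scalerA.
have QB : forall i k, Q i k = \sum_j ip (v k) (u j) * Rm i j.
  by move=> i k; rewrite /Q (ipC hip) Kvw0 (coef_on hip).
have Kvw : forall k, K (v k) = \sum_i Q i k *: w i.
  by move=> k; rewrite {1}Kvw0; apply: eq_bigr => i _; rewrite QB.
pose Qm : 'M[R]_n.+1 := \matrix_(i, k) Q i k.
have QtQ : Qm^T *m Qm = 1%:M.
  apply/matrixP => k l; rewrite !mxE -onKv /= Kvw (Kvw l) (ip_on hip) //.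
  by apply: eq_bigr => i _; rewrite !mxE.
have QQt : Qm *m Qm^T = 1%:M by apply: mulmx1C.
have wKv : forall i, w i = \sum_k Q i k *: K (v k).
  move=> i; apply/eqP; rewrite -subr_eq0; apply/eqP/(ip_eq0 hip).
  have h1 : ip (w i) (\sum_k Q i k *: K (v k)) = 1.
    have := congr1 (fun M : 'M[R]_n.+1 => M i i) QQt; rewrite !mxE eqxx /= => hq.
    apply: eq_trans hq; rewrite (ip_sumr hip); apply: eq_bigr => k _.
    by rewrite (ipZr hip) !mxE.
  have h2 : ip (\sum_k Q i k *: K (v k)) (\sum_k Q i k *: K (v k)) = 1.
    rewrite (ip_on hip) // -h1 (ip_sumr hip); apply: eq_bigr => k _.
    by rewrite (ipZr hip).
  have hwi : ip (w i) (w i) = 1 by rewrite hw eqxx.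
  rewrite !((ipDl hip), (ipDr hip), (ipNl hip), (ipNr hip)) h1 (ipC hip _ (w i)) h1 h2 hwi.
  by rewrite subrr add0r opprK addNr.
have uw : forall j i, ip (u j) (w i) = Q i j * cos (th j).
  move=> j i; rewrite wKv (ip_sumr hip) (bigD1 j) //= big1 ?addr0.
    by rewrite (ipZr hip) hcos eqxx.
  by move=> k kj; rewrite (ipZr hip) hcos eq_sym (negbTE kj) mulr0.
have dQ : forall k, d k 0 = Q ord_max k.
  by move=> k; rewrite /Q hd (coef_on hip).
pose wn (i : 'I_n) : 'I_n.+1 := widen_ord (leqnSn n) i.
have wn_eq : forall i j, (wn i == wn j) = (i == j).
  by move=> i j; apply/eqP/eqP => [/(congr1 val) /= /val_inj|->].
have liftE : forall j : 'I_n, lift ord_max j = wn j.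
  by move=> j; apply: val_inj; rewrite /= /bump leqNgt ltn_ord.
pose M : 'M[R]_n := \matrix_(j, i) ip (u (wn j)) (w (wn i)).
have N1tE : forall j l : 'I_n, N1t j l = (j == l)%:R * sin (th (wn j)) ^+ 2
    + cos (th (wn j)) * d (wn j) 0 * (cos (th (wn l)) * d (wn l) 0).
  move=> j l; rewrite /N1t /N1 /Lsin /Lcos mulmx_diag !mul_diag_mx !mxE !liftE big_ord1 !mxE.
  by rewrite wn_eq; case: eqP => _; rewrite /= ?mulr1n ?mulr0n; ring.
have MMt : M *m M^T = 1%:M - N1t.
  apply/matrixP => j l; rewrite [RHS]mxE [X in _ + X]mxE N1tE [X in X + _]mxE [LHS]mxE.
  have := congr1 (fun M : 'M[R]_n.+1 => M (wn j) (wn l)) QtQ.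
  rewrite !mxE big_ord_recr /= wn_eq => hq.
  transitivity (cos (th (wn j)) * cos (th (wn l)) *
     (\sum_(i < n) Q (wn i) (wn j) * Q (wn i) (wn l))).
    rewrite mulr_sumr; apply: eq_bigr => i _; rewrite !mxE !uw; ring.
  have -> : \sum_(i < n) Q (wn i) (wn j) * Q (wn i) (wn l) =
      (j == l)%:R - Q ord_max (wn j) * Q ord_max (wn l).
    rewrite -hq !mxE addrK; apply: eq_bigr => i _; rewrite !mxE.
    by [].
  rewrite !dQ; case: eqP => [->|_]; rewrite /= ?mulr1n ?mulr0n.
    by rewrite sin2cos2; ring.
  ring.
have PM : forall a, (M *m M^T) *m z a = (1 - lam a) *: z a.
  by move=> a; rewrite MMt mulmxBl mul1mx Nz scalerBl scale1r.
have zon' : orthonormal z.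
  move=> a b0; rewrite dotE zon mxE.
  by case: (a == b0); rewrite /= ?mulr1n ?mulr0n.
pose Bm : 'M[R]_n.+1 := \matrix_(k, j) ip (v k) (u j).
have QRB : Qm = Rm *m Bm^T.
  apply/matrixP => i k; rewrite !mxE QB; apply: eq_bigr => j _.
  by rewrite !mxE mulrC.
have detR : \det Rm != 0.
  have := congr1 determinant QtQ; rewrite det_mulmx det_tr det1 QRB det_mulmx.
  move=> h; apply/eqP => d0; move: h; rewrite d0 !mul0r => /eqP.
  by rewrite eq_sym oner_eq0.
have Rtrig : is_trig_mx Rm^T.
  by apply/is_trig_mxP => i j ij; rewrite mxE hRup.
have diagR : forall i, Rm i i != 0.
  move: detR; rewrite -det_tr (det_trig Rtrig) => /prodf_neq0 h i.
  by have := h i isT; rewrite mxE.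
pose R' : 'M[R]_n := \matrix_(i, j) Rm (wn i) (wn j).
have R'u : R' \in unitmx.
  have Rt : is_trig_mx R'^T.
    by apply/is_trig_mxP => i j ij; rewrite !mxE hRup.
  rewrite unitmxE unitfE -det_tr (det_trig Rt); apply/prodf_neq0 => i _.
  by rewrite !mxE.
pose Xof (c : 'cV[R]_n) := \sum_j c j 0 *: Unm1 j.
pose Yof (e : 'cV[R]_n) := \sum_i e i 0 *: w (wn i).
pose cX x : 'cV[R]_n := \col_j ip x (Unm1 j).
pose cY y : 'cV[R]_n := \col_i ip y (w (wn i)).
have onU : onV ip Unm1.
  by move=> i j; rewrite /Unm1 onu -/(wn i) -/(wn j) wn_eq.
have onW : onV ip (fun i => w (wn i)).
  by move=> i j; rewrite hw wn_eq.
have XofK : forall c, cX (Xof c) = c.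
  by move=> c; apply/matrixP => j k; rewrite (ord1 k) mxE (coef_on hip).
have YofK : forall e, cY (Yof e) = e.
  by move=> e; apply/matrixP => j k; rewrite (ord1 k) mxE (coef_on hip _ _ onW).
have SnewXof : forall c, Snew (Xof c) by move=> c; exists (fun j => c j 0).
have SnewX : forall x, Snew x -> x = Xof (cX x).
  move=> x [c xc]; rewrite {1}(expand_on hip onU xc).
  by apply: eq_bigr => j _; rewrite mxE.
have KX : forall c, K (Xof c) = Yof (R' *m c).
  move=> c; rewrite linear_sum.
  transitivity (\sum_j \sum_i (R' i j * c j 0) *: w (wn i)); last first.
    rewrite exchange_big; apply: eq_bigr => i _; rewrite mxE scaler_suml.
    by apply: eq_bigr.
  apply: eq_bigr => j _; rewrite linearZ /Unm1 hQR big_ord_recr /=.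
  rewrite hRup ?scale0r ?addr0; last by rewrite /= ltn_ord.
  rewrite scaler_sumr; apply: eq_bigr => i _; rewrite scalerA mxE mulrC.
  by [].
have KSnewY : forall y, KSnew y -> y = Yof (cY y).
  move=> y [x Sx <-]; rewrite (SnewX x Sx) KX YofK //.
have KSnewYof : forall e, KSnew (Yof e).
  move=> e; exists (Xof (invmx R' *m e)); first exact: SnewXof.
  by rewrite KX mulKVmx.
have ipXX : forall c c', ip (Xof c) (Xof c') = dot c c'.
  by move=> c c'; rewrite (ip_on hip).
have ipYY : forall e e', ip (Yof e) (Yof e') = dot e e'.
  by move=> e e'; rewrite (ip_on hip _ _ onW).
have ipXY : forall c e, ip (Xof c) (Yof e) = dot c (M *m e).
  move=> c e; rewrite (ip_suml hip) /dot; apply: eq_bigr => j _.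
  rewrite (ipZl hip) (ip_sumr hip) mxE; congr (_ * _); apply: eq_bigr => i _.
  by rewrite (ipZr hip) mxE mulrC.
split.
- move=> th' u' w' hps a.
  have uS' : forall j, Snew (u' j) by move=> j; have [_ [h _] _ _ _] := hps j.
  have wS' : forall j, KSnew (w' j) by move=> j; have [_ [_ h] _ _ _] := hps j.
  pose cc j := cX (u' j); pose ee j := cY (w' j).
  have u'E : forall j, u' j = Xof (cc j) by move=> j; apply: SnewX.
  have w'E : forall j, w' j = Yof (ee j) by move=> j; apply: KSnewY.
  have hm : mps M (fun j => cos (th' j)) cc ee.
    move=> j; have [_ _ h3 h4 h5] := hps j; split.
    + by rewrite -ipXX -u'E h3.1.
    + by rewrite -ipYY -w'E h3.2.
    + by move=> i ij; rewrite -ipXX -ipYY -!u'E -!w'E; exact: h4.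
    + by rewrite -ipXY -u'E -w'E h5.1.
    + move=> x y xx yy hxy; rewrite -ipXY; apply: h5.2.
      * exact: SnewXof.
      * exact: KSnewYof.
      * by rewrite ipXX.
      * by rewrite ipYY.
      * by move=> i ij; rewrite u'E w'E ipXX ipYY; exact: hxy.
  have := mps_unique hm zon' PM lamm a.
  by rewrite sin2cos2 => ->; ring.
have [e he] := mps_exists zon' PM lamm.
pose sg a := Num.sqrt (1 - lam a).
have unewE : forall a, unew a = Xof (z a) by [].
have lam1 : forall a, 0 <= 1 - lam a.
  move=> a; have := dot_ge0 (M^T *m z a).
  by rewrite -dot_mulmx mulmxA PM dotZr zon' eqxx mulr1.
have sg1 : forall a, 0 <= sg a <= 1.
  move=> a; have [h1 h2 _ h4 _] := he a; rewrite sqrtr_ge0 /=.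
  have := CSV hip (unew a) (Yof (e a)).
  rewrite unewE ipXX ipYY ipXY h1 h2 mulr1 /sg -h4.
  rewrite -(real_normK (num_real _)) => H.
  have : `|dot (z a) (M *m e a)| ^+ 2 <= 1 ^+ 2 by rewrite expr1n.
  by rewrite ler_pXn2r // ?nnegrE.
exists (fun a => acos (sg a)), (fun a => Yof (e a)); split; last first.
  move=> a; have [s0 s1] := andP (sg1 a).
  rewrite sin2cos2 acosK; last by rewrite in_itv /=; apply/andP; split => //; lra.
  by rewrite sqr_sqrtr //; ring.
move=> j; have [h1 h2 h3 h4 h5] := he j; have [s0 s1] := andP (sg1 j).
split.
- apply/andP; split; first by apply: acos_ge0; apply/andP; split => //; lra.
  by apply: acos_le_pihalf; apply/andP.
- by split; [rewrite unewE; apply: SnewXof | apply: KSnewYof].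
- by rewrite unewE ipXX ipYY h1 h2.
- by move=> i ij; rewrite !unewE ipXX ipYY; exact: h3.
split.
  rewrite acosK; last by rewrite in_itv /=; apply/andP; split => //; lra.
  by rewrite unewE ipXY h4.
move=> x y Sx Ky xx yy hxy.
rewrite acosK; last by rewrite in_itv /=; apply/andP; split => //; lra.
rewrite (SnewX x Sx) (KSnewY y Ky) ipXY; apply: h5.
- by rewrite -ipXX -SnewX.
- by rewrite -ipYY -KSnewY.
- move=> i ij; rewrite -(XofK (z i)) -(YofK (e i)) -ipXX -ipYY -!SnewX // -!KSnewY //.
  by rewrite -unewE; exact: hxy.
Qed.
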